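(* Let $\mathbb{R}^d=V\oplus W$ with $\dim V=\ell$ and $\dim W=d-\ell$. Let $K\subseteq V$ and $L\subseteq W$ be convex bodies (in $V$ and $W$ respectively) that contain the origin, and let $\Lambda\subseteq V$ and $\Gamma\subseteq W$ be lattices. Then for every $i\in\{1,\dots,d\}$, $$\mu_i(K\oplus L,\Lambda\oplus\Gamma)=\max_{\substack{0\le j\le \ell\\ 0\le i-j\le d-\ell}}\Big(\mu_j(K,\Lambda)+\mu_{i-j}(L,\Gamma)\Big).$$
   Context: A convex body in a real vector space is a full-dimensional compact convex subset; a lattice is a full-rank discrete subgroup. The direct sum of $K\subseteq V$ and $L\subseteq W$ (both containing the origin) is $K\oplus L=\{\lambda x+(1-\lambda)y: x\in K,\ y\in L,\ \lambda\in[0,1]\}\subseteq\mathbb{R}^d$, and $\Lambda\oplus\Gamma=\{a+b: a\in\Lambda,\ b\in\Gamma\}$. For a $k$-dimensional real vector space $E$, a lattice $\Gamma'\subseteq E$, a convex body $C\subseteq E$ and $i\in\{1,\dots,k\}$, the $i$-th covering minimum is $\mu_i(C,\Gamma')=\min\{\mu\ge 0: (\mu C+\Gamma')\cap U\neq\emptyset$ for every affine subspace $U\subseteq E$ of dimension $k-i\}$; by convention $\mu_0(C,\Gamma')=0$. Covering minima of $K,\Lambda$ are taken in $V$, those of $L,\Gamma$ in $W$. *)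

(* Defs.v *)
From HB Require Import structures.
From mathcomp Require Import all_boot all_order all_algebra.
From mathcomp Require Import all_classical all_reals all_analysis.
Set Implicit Arguments. Unset Strict Implicit. Unset Printing Implicit Defensive.
Import Order.TTheory GRing.Theory Num.Theory.
Import numFieldNormedType.Exports.
Local Open Scope classical_set_scope.
Local Open Scope ring_scope.

(* Ambient space R^d = 'rV[R]_d.  A linear subspace E of R^d is represented by
   a matrix E : 'M_d through its row space (mxalgebra); its dimension is \rank E. *)

Section CoveringMinima.
Variables (R : realType) (d : nat).
Implicit Types (E : 'M[R]_d) (C G : set 'rV[R]_d).

Definition in_sub E (x : 'rV[R]_d) : Prop := (x <= E)%MS.

Definition convex_set C : Prop :=
  forall x y (t : R), C x -> C y -> 0 <= t <= 1 -> C (t *: x + (1 - t) *: y).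

(* C is a convex body in the subspace E: a compact convex subset of E which is
   full-dimensional in E (nonempty interior relative to E). *)
Definition convex_body_in E C : Prop :=
  [/\ C `<=` in_sub E, convex_set C, compact C &
      exists c, C c /\ \forall y \near c, in_sub E y -> C y].

Definition lattice_in E G : Prop :=
  [/\ G `<=` in_sub E, G 0, (forall x y, G x -> G y -> G (x - y)),
      (\forall y \near (0 : 'rV[R]_d), G y -> y = 0) &
      exists B : 'M[R]_d, (forall i, G (row i B)) /\ (E <= B)%MS].

(* (mu C + G) meets every affine subspace of E of dimension n, i.e. every
   a + U with a in E and U a linear subspace of E with dim U = n. *)
Definition covers E C G (mu : R) (n : nat) : Prop :=
  forall (a : 'rV[R]_d) (U : 'M[R]_d), in_sub E a -> (U <= E)%MS -> \rank U = n ->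
    exists c g, C c /\ G g /\ (mu *: c + g - a <= U)%MS.

(* i-th covering minimum of C w.r.t. G inside the (\rank E)-dimensional space E;
   mu_0 = 0 by convention. *)
Definition covering_minimum E C G (i : nat) : R :=
  if i == 0%N then 0
  else inf [set mu : R | 0 <= mu /\ covers E C G mu (\rank E - i)].

Definition set_dsum C D : set 'rV[R]_d :=
  [set z | exists x y (t : R), [/\ C x, D y, 0 <= t <= 1 & z = t *: x + (1 - t) *: y]].

Definition lattice_dsum G H : set 'rV[R]_d :=
  [set z | exists a b, [/\ G a, H b & z = a + b]].

End CoveringMinima.

(* Main.v *)
Require Import Defs.
From HB Require Import structures.
From mathcomp Require Import all_boot all_order all_algebra.
From mathcomp Require Import all_classical all_reals all_analysis.
From mathcomp Require Import lra zify.
Set Implicit Arguments. Unset Strict Implicit. Unset Printing Implicit Defensive.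
Import Order.TTheory GRing.Theory Num.Theory.
Import numFieldNormedType.Exports.
Local Open Scope classical_set_scope.
Local Open Scope ring_scope.

Lemma scale_in (R : realType) (d : nat) (C : set 'rV[R]_d) (k : 'rV[R]_d) (s a : R) :
  Defs.convex_set C -> C 0 -> C k -> 0 <= s -> s <= a ->
  exists c, C c /\ a *: c = s *: k.
Proof.
move=> cC C0 Ck s0 sa.
have [a0|a0] := eqVneq a 0.
  rewrite a0 in sa *.
  have s0' : s = 0 by apply/le_anti; rewrite sa s0.
  by exists 0; split => //; rewrite s0' !scale0r.
have a_gt0 : 0 < a by rewrite lt_neqAle eq_sym a0 (le_trans s0 sa).
exists ((s / a) *: k + (1 - s / a) *: 0); split.
  apply: (cC k 0 (s / a)) => //.
  by rewrite divr_ge0 ?(ltW a_gt0) //= ler_pdivrMr // mul1r.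
by rewrite scaler0 addr0 scalerA mulrCA divff // mulr1.
Qed.

Lemma cov_mono (R : realType) (d : nat) (E : 'M[R]_d) (C G : set 'rV[R]_d) (mu nu : R) n :
  Defs.convex_set C -> C 0 -> 0 <= mu -> mu <= nu -> covers E C G mu n -> covers E C G nu n.
Proof.
move=> cC C0 m0 mn cov a U Ha HU rU.
have [c [g [Cc [Gg Hs]]]] := cov a U Ha HU rU.
have [c' [Cc' e]] := scale_in cC C0 Cc m0 mn.
by exists c', g; rewrite e.
Qed.

Lemma cov_full (R : realType) (d : nat) (E : 'M[R]_d) (C G : set 'rV[R]_d) (mu : R) :
  C 0 -> G 0 -> covers E C G mu (\rank E).
Proof.
move=> C0 G0 a U Ha HU rU; exists 0, 0; split => //; split => //.
have EU : (E <= U)%MS by rewrite -(mxrank_leqif_sup HU).2 rU.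
by rewrite scaler0 add0r sub0r eqmx_opp (submx_trans Ha EU).
Qed.

Lemma sub_exists (R : realType) (d : nat) (E : 'M[R]_d) r :
  (r <= \rank E)%N -> exists U : 'M[R]_d, (U <= E)%MS /\ \rank U = r.
Proof.
move=> rE.
have rd : (r <= d)%N by apply: leq_trans rE (rank_leq_col E).
exists (pid_mx r *m row_base E); split.
  by rewrite (submx_trans (submxMl _ _)) // eq_row_base.
by rewrite mxrankMfree ?row_base_free // rank_pid_mx.
Qed.
Section Lat.
Variables (R : realType) (d : nat) (G : set 'rV[R]_d).
Hypotheses (G0 : G 0) (GB : forall x y, G x -> G y -> G (x - y)).
Lemma latN x : G x -> G (- x).
Proof. by move=> Gx; have := GB G0 Gx; rewrite sub0r. Qed.
Lemma latD x y : G x -> G y -> G (x + y).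
Proof. by move=> Gx Gy; rewrite -(opprK y); apply: GB => //; apply: latN. Qed.
Lemma latMn x n : G x -> G (x *+ n).
Proof. by move=> Gx; elim: n => [|n IH]; [rewrite mulr0n | rewrite mulrS; exact: latD]. Qed.
Lemma latz x z : G x -> G (x *~ z).
Proof.
move=> Gx; case: z => n; first exact: latMn.
by rewrite NegzE mulrNz; apply/latN/latMn.
Qed.
Lemma latsum (I : Type) (r : seq I) (F : I -> 'rV[R]_d) :
  (forall i, G (F i)) -> G (\sum_(i <- r) F i).
Proof. by move=> HF; apply: (big_ind G) => // x y; apply: latD. Qed.
End Lat.

Lemma cov_exists (R : realType) (d : nat) (E : 'M[R]_d) (C G : set 'rV[R]_d) :
  convex_body_in E C -> lattice_in E G ->
  exists mu, 0 <= mu /\ forall n, covers E C G mu n.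
Proof.
case=> CE cC cpt [c0 [Cc0 Hn]] [GE G0 Gsub _ [B [GB EB]]].
move/nbhs_ballP: Hn => [r r0 Hr].
pose R0 := \sum_i `|row i B|.
have R0ge : 0 <= R0 by rewrite sumr_ge0.
pose mu := (R0 + 1) / r.
have mu0 : 0 < mu by rewrite divr_gt0 // ltr_wpDl.
exists mu; split; first exact: ltW.
move=> n a U Ha HU rU.
have c0E : (c0 <= E)%MS by apply: CE.
have v'E : (a - mu *: c0 <= E)%MS.
  by rewrite addmx_sub // eqmx_opp scalemx_sub.
have [D eD] := submxP (submx_trans v'E EB).
pose g := \sum_i (Num.floor (D 0 i))%:~R *: row i B.
pose w := \sum_i (D 0 i - (Num.floor (D 0 i))%:~R) *: row i B.
have ew : a - mu *: c0 = g + w.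
  rewrite eD mulmx_sum_row /g /w -big_split; apply: eq_bigr => i _.
  by rewrite /= -scalerDl addrC subrK.
have Gg : G g.
  apply: latsum => // i; rewrite scaler_int; exact: latz.
have gE : (g <= E)%MS by apply: GE.
have wE : (w <= E)%MS.
  have -> : w = (a - mu *: c0) - g by rewrite ew addrC addKr.
  by rewrite addmx_sub // eqmx_opp.
have wn : `|w| <= R0.
  apply: le_trans (ler_norm_sum _ _ _) _; apply: ler_sum => i _.
  rewrite normrZ ger0_norm; last by rewrite subr_ge0 floor_le.
  rewrite ler_piMl // lerBlDr addrC -[1]/(1%:~R) -intrD ltW //.
  exact: floorD1_gt.
exists (c0 + mu^-1 *: w), g; split.
  apply: Hr; last by rewrite /in_sub addmx_sub // scalemx_sub.
  rewrite -ball_normE /= opprD addrA subrr add0r normrN normrZ ger0_norm;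
    last by rewrite invr_ge0 ltW.
  apply: (le_lt_trans (ler_wpM2l _ wn)); first by rewrite invr_ge0 ltW.
  rewrite /mu invf_div mulrAC -mulrA gtr_pMr // ltr_pdivrMr ?mul1r ?ltrDl //.
  by rewrite ltr_wpDl.
split=> //.
have ea : a = mu *: c0 + (g + w) by rewrite -ew addrC subrK.
rewrite scalerDr scalerA mulfV ?gt_eqF // scale1r ea [g + w]addrC addrA subrr.
exact: sub0mx.
Qed.
Lemma zid1 (V : zmodType) (p q a u : V) : p + q - a = u + (q - ((a + u) - p)).
Proof. rewrite opprB opprD addrCA !addrA.
by rewrite [q + u + p]addrAC [q + p + u - a]addrAC addrK [q + p]addrC. Qed.
Lemma zid2 (V : zmodType) (p q a b u v : V) :
  p + q - (a + b) - (u + v) = (p - a - u) + (q - b - v).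
Proof. by rewrite !opprD (addrACA p q) (addrACA (p - a)). Qed.
Lemma Snonempty (R : realType) (d : nat) (E : 'M[R]_d) (C G : set 'rV[R]_d) n :
  convex_body_in E C -> lattice_in E G ->
  [set mu : R | 0 <= mu /\ covers E C G mu n] !=set0.
Proof. by move=> HC HG; have [mu [m0 Hm]] := cov_exists HC HG; exists mu. Qed.

Lemma cm_ge0 (R : realType) (d : nat) (E : 'M[R]_d) (C G : set 'rV[R]_d) j :
  convex_body_in E C -> lattice_in E G -> 0 <= covering_minimum E C G j.
Proof.
move=> HC HG; rewrite /covering_minimum; case: eqP => // _.
by apply: lb_le_inf; [exact: Snonempty | move=> y [] ].
Qed.

Lemma cm_upper (R : realType) (d : nat) (E : 'M[R]_d) (C G : set 'rV[R]_d) j (al : R) :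
  convex_body_in E C -> C 0 -> lattice_in E G ->
  covering_minimum E C G j < al -> covers E C G al (\rank E - j).
Proof.
move=> HC C0 HG; rewrite /covering_minimum; case: eqP => [->|_] Hal.
  rewrite subn0; apply: cov_full => //; by case: HG.
have [y [y0 Hy] ya] := inf_lt (Snonempty _ HC HG) Hal.
case: (HC) => _ cC _ _; exact: (cov_mono cC C0 y0 (ltW ya) Hy).
Qed.

Lemma cm_lower (R : realType) (d : nat) (E : 'M[R]_d) (C G : set 'rV[R]_d) j (al : R) :
  0 <= al -> al < covering_minimum E C G j ->
  exists a (U : 'M[R]_d), [/\ (a <= E)%MS, (U <= E)%MS, \rank U = (\rank E - j)%N &
     forall c g, C c -> G g -> ~ (al *: c + g - a <= U)%MS].
Proof.
move=> al0; rewrite /covering_minimum; case: eqP => [_|_] Hal.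
  by exfalso; move: (le_lt_trans al0 Hal); rewrite ltxx.
apply: contrapT => Hno.
have : inf [set mu | 0 <= mu /\ covers E C G mu (\rank E - j)] <= al.
  apply: ge_inf; first by exists 0 => y [].
  split=> // a U Ha HU rU; apply: contrapT => Hn; apply: Hno.
  exists a, U; split=> // c g Cc Gg Hin; apply: Hn; by exists c, g.
by rewrite leNgt Hal.
Qed.

Lemma miss_gt (R : realType) (d : nat) (C G : set 'rV[R]_d) (a : 'rV[R]_d) (U : 'M[R]_d) (al s : R) c g :
  Defs.convex_set C -> C 0 ->
  (forall c g, C c -> G g -> ~ (al *: c + g - a <= U)%MS) ->
  0 <= s -> C c -> G g -> (s *: c + g - a <= U)%MS -> al < s.
Proof.
move=> cC C0 Hm s0 Cc Gg Hs; rewrite ltNge; apply/negP => sa.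
have [c' [Cc' e]] := scale_in cC C0 Cc s0 sa.
by apply: (Hm c' g Cc' Gg); rewrite e.
Qed.
Lemma dis0 (R : realType) (d : nat) (V W : 'M[R]_d) (x : 'rV[R]_d) :
  (V :&: W <= (0 : 'M[R]_d))%MS -> (x <= V)%MS -> (x <= W)%MS -> x = 0.
Proof.
move=> VW xV xW; apply/eqP; rewrite -submx0 (submx_trans _ VW) //.
by rewrite sub_capmx xV.
Qed.

Lemma key_lower (R : realType) (d : nat) (V W : 'M[R]_d) (K L Lam Gam : set 'rV[R]_d)
    (mu : R) n (a1 a2 : 'rV[R]_d) (U1 U2 : 'M[R]_d) :
  (V :&: W <= (0 : 'M[R]_d))%MS -> K `<=` in_sub V -> L `<=` in_sub W ->
  Lam `<=` in_sub V -> Gam `<=` in_sub W ->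
  (a1 <= V)%MS -> (U1 <= V)%MS -> (a2 <= W)%MS -> (U2 <= W)%MS ->
  (\rank U1 + \rank U2)%N = n ->
  covers 1%:M (set_dsum K L) (lattice_dsum Lam Gam) mu n ->
  exists t k y lam gam, [/\ 0 <= t <= 1, K k, L y, Lam lam & Gam gam] /\
     ((mu * t) *: k + lam - a1 <= U1)%MS /\ ((mu * (1 - t)) *: y + gam - a2 <= U2)%MS.
Proof.
move=> VW KV LW LV GW a1V U1V a2W U2W rk cov.
have dis : (U1 :&: U2)%MS = 0.
  by apply/eqP; rewrite -submx0 (submx_trans (capmxS U1V U2W) VW).
have := cov (a1 + a2) (U1 + U2)%MS (submx1 _) (submx1 _).
rewrite mxrank_disjoint_sum // => /(_ rk).
move=> [c [g [[x [y [t [Kx Ly t01 ->]]]] [[lam [gam [Ll Gg ->]]] Hin]]]].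
case/sub_addsmxP: Hin => [[D1 D2]] /= e.
pose P := (mu * t) *: x + lam - a1 - D1 *m U1.
pose Q := (mu * (1 - t)) *: y + gam - a2 - D2 *m U2.
have ePQ : P + Q = 0.
  rewrite /P /Q -zid2.
  have -> : (mu * t) *: x + lam + ((mu * (1 - t)) *: y + gam) =
    mu *: (t *: x + (1 - t) *: y) + (lam + gam).
    by rewrite scalerDr !scalerA addrACA.
  by rewrite e subrr.
have PV : (P <= V)%MS.
  rewrite /P !addmx_sub ?eqmx_opp ?scalemx_sub //; try by [apply: KV | apply: LV].
  exact: submx_trans (submxMl _ _) U1V.
have QW : (Q <= W)%MS.
  rewrite /Q !addmx_sub ?eqmx_opp ?scalemx_sub //; try by [apply: LW | apply: GW].
  exact: submx_trans (submxMl _ _) U2W.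
have P0 : P = 0.
  apply: (dis0 VW PV); have -> : P = - Q by apply/eqP; rewrite -addr_eq0 ePQ.
  by rewrite eqmx_opp.
have Q0 : Q = 0 by rewrite -ePQ P0 add0r.
exists t, x, y, lam, gam; split => //; split.
  have -> : (mu * t) *: x + lam - a1 = D1 *m U1.
    by apply/eqP; rewrite -subr_eq0; apply/eqP.
  exact: submxMl.
have -> : (mu * (1 - t)) *: y + gam - a2 = D2 *m U2.
  by apply/eqP; rewrite -subr_eq0; apply/eqP.
exact: submxMl.
Qed.



Lemma key_upper (R : realType) (d l : nat) (V W : 'M[R]_d) (K L Lam Gam : set 'rV[R]_d)
    (i : nat) (mu : R) :
  \rank V = l -> \rank W = (d - l)%N -> (V :&: W <= (0 : 'M[R]_d))%MS ->
  (1%:M <= V + W)%MS ->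
  convex_body_in V K -> K 0 -> convex_body_in W L -> L 0 ->
  lattice_in V Lam -> lattice_in W Gam -> (1 <= i <= d)%N ->
  (forall j, (j <= l)%N -> (j <= i)%N -> (i - j <= d - l)%N ->
       covering_minimum V K Lam j + covering_minimum W L Gam (i - j) < mu) ->
  covers 1%:M (set_dsum K L) (lattice_dsum Lam Gam) mu (d - i).
Proof.
move=> rV rW VW VWf HK K0 HL L0 HLam HGam /andP[i1 id] Hmu a U _ _ rU.
pose P := proj_mx V W.
have VW0 : (V :&: W)%MS = 0 by apply/eqP; rewrite -submx0.
have kerW : (kermx P <= W)%MS.
  have X0 : kermx P *m P = 0 by apply/sub_kermxP.
  have := proj_mx_compl_sub (submx_trans (submx1 (kermx P)) VWf).
  by rewrite -/P X0 subr0.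
have Wker : (W <= kermx P)%MS by apply/sub_kermxP; exact: proj_mx_0.
have r12 : (\rank (U *m P) + \rank (U :&: W) = d - i)%N.
  rewrite -rU -(mxrank_mul_ker U P); congr (_ + _)%N.
  by apply/eqP; rewrite eqn_leq !mxrankS // capmxS.
have r1l : (\rank (U *m P) <= l)%N by rewrite -rV mxrankS // proj_mx_sub.
have r2l : (\rank (U :&: W) <= d - l)%N by rewrite -rW mxrankS // capmxSr.
have ld : (l <= d)%N by rewrite -rV rank_leq_col.
pose j := (l - \rank (U *m P))%N.
have Hj := Hmu j (leq_subr _ _) (ltac:(rewrite /j; lia)) (ltac:(rewrite /j; lia)).
set aj := covering_minimum V K Lam j in Hj.
set bj := covering_minimum W L Gam (i - j) in Hj.
have aj0 : 0 <= aj by apply: cm_ge0.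
have bj0 : 0 <= bj by apply: cm_ge0.
pose al := aj + (mu - aj - bj) / 2.
pose be := mu - al.
have alj : aj < al by rewrite /al; lra.
have bej : bj < be by rewrite /be /al; lra.
have mu0 : 0 < mu by lra.
have covK := cm_upper HK K0 HLam alj.
have [k [lam [Kk [Ll Hk]]]] := covK (a *m P) (U *m P) (proj_mx_sub _ _ _)
   (proj_mx_sub _ _ _) (ltac:(rewrite rV /j; lia)).
case/submxP: Hk => D eD.
pose u := D *m U.
pose x := a + u.
have exP : x *m P = al *: k + lam.
  by rewrite /x mulmxDl /u -mulmxA -eD addrC subrK.
pose w0 := x - x *m P.
have w0W : (w0 <= W)%MS := proj_mx_compl_sub (submx_trans (submx1 x) VWf).
have covL := cm_upper HL L0 HGam bej.
have [y [gam [Ly [Gg Hy]]]] := covL w0 (U :&: W)%MS w0W (capmxSr _ _)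
   (ltac:(rewrite rW /j; lia)).
exists ((al / mu) *: k + (1 - al / mu) *: y), (lam + gam); split.
  exists k, y, (al / mu); split => //.
  rewrite divr_ge0 /=; [|lra|lra].
  by rewrite ler_pdivrMr // mul1r /al; lra.
split; first by exists lam, gam.
have -> : mu *: ((al / mu) *: k + (1 - al / mu) *: y) = al *: k + be *: y.
  rewrite scalerDr !scalerA mulrBr mulr1 [mu * (al / mu)]mulrC divfK //.
  by rewrite gt_eqF.
rewrite addrACA -exP (zid1 _ _ _ u) -/x -/w0.
rewrite addmx_sub ?submxMl //.
exact: submx_trans Hy (capmxSl _ _).
Qed.

Lemma bigmax_ge0 (R : realType) (I : finType) (P : pred I) (F : I -> R) :
  0 <= \big[Num.max/0]_(i | P i) F i.
Proof. by apply: (big_rec (fun x => 0 <= x)) => // j x _ x0; rewrite le_max x0 orbT. Qed.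

Lemma bigmax_le (R : realType) (I : finType) (P : pred I) (F : I -> R) (x : R) :
  0 <= x -> (forall i, P i -> F i <= x) -> \big[Num.max/0]_(i | P i) F i <= x.
Proof.
move=> x0 H; apply: (big_ind (fun y => y <= x));
  [exact: x0 | by move=> y z yx zx; rewrite ge_max yx zx | exact: H].
Qed.

Lemma le_bigmax_term (R : realType) (I : finType) (P : pred I) (F : I -> R) i0 :
  P i0 -> F i0 <= \big[Num.max/0]_(i | P i) F i.
Proof. by move=> Pi0; rewrite (bigD1 i0) //= le_max lexx. Qed.

Lemma fin1 (R : realType) (mu x : R) : 0 <= x -> mu < mu - x -> False.
Proof. move=> *; lra. Qed.
Lemma fin2 (R : realType) (mu x : R) : 0 <= mu - x -> mu < x -> False.
Proof. move=> *; lra. Qed.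

Lemma natA (d l i j : nat) : (j <= l)%N -> (j <= i)%N -> (i - j <= d - l)%N ->
  (l <= d)%N -> (i <= d)%N -> (l - j + (d - l - (i - j)))%N = (d - i)%N.
Proof. move=> *; lia. Qed.

Lemma fin3 (R : realType) (al be mu x : R) :
  al + be = mu -> be < mu - x -> al < x -> False.
Proof. move=> *; lra. Qed.

Unset Implicit Arguments.

Theorem theorem1p2 (R : realType) (d l : nat) (V W : 'M[R]_d)
    (K L Lam Gam : set 'rV[R]_d) :
  \rank V = l -> \rank W = (d - l)%N ->
  (V :&: W == (0 : 'M[R]_d))%MS -> (V + W == (1%:M : 'M[R]_d))%MS ->
  convex_body_in V K -> K 0 -> convex_body_in W L -> L 0 ->
  lattice_in V Lam -> lattice_in W Gam ->
  forall i : nat, (1 <= i <= d)%N ->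
    covering_minimum (1%:M : 'M[R]_d) (set_dsum K L) (lattice_dsum Lam Gam) i =
    \big[Num.max/0]_(j < l.+1 | (j <= i)%N && (i - j <= d - l)%N)
       (covering_minimum V K Lam j + covering_minimum W L Gam (i - j)).
Proof.
move=> rV rW VW VWf HK K0 HL L0 HLam HGam i Hi.
case/andP: VW => VW _; case/andP: VWf => _ VWf.
have ld : (l <= d)%N by rewrite -rV rank_leq_col.
have Hi' := Hi; case/andP: Hi' => i1 id.
case: (HK) => KV cK _ _; case: (HL) => LW cL _ _.
case: (HLam) => LamV _ _ _ _; case: (HGam) => GamW _ _ _ _.
have -> : covering_minimum (1%:M : 'M[R]_d) (set_dsum K L) (lattice_dsum Lam Gam) i =
   inf [set mu | 0 <= mu /\ covers 1%:M (set_dsum K L) (lattice_dsum Lam Gam) mu (d - i)].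
  by rewrite /covering_minimum mxrank1; case: eqP => // i0; move: i1; rewrite i0.
set T := [set mu | _].
set M := \big[Num.max/0]_(j < l.+1 | _) _.
have M0 : 0 <= M by apply: bigmax_ge0.
have Tup : forall e, 0 < e -> T (M + e).
  move=> e e0; split; first by rewrite addr_ge0 // ltW.
  apply: key_upper rV rW VW VWf HK K0 HL L0 HLam HGam Hi _ => j jl ji ij.
  have := le_bigmax_term
    (fun j : 'I_l.+1 => covering_minimum V K Lam j + covering_minimum W L Gam (i - j))
    (P := fun j : 'I_l.+1 => (j <= i)%N && (i - j <= d - l)%N) (i0 := Ordinal (n := l.+1) (m := j) jl)
    (ltac:(by rewrite /= ji ij)).
  by rewrite /= -/M => h; rewrite (le_lt_trans h) // ltrDl.
have Tne : T !=set0 by exists (M + 1); apply: Tup; exact: ltr01.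
apply/le_anti/andP; split.
  apply/ler_addgt0Pr => e e0; apply: ge_inf; last exact: Tup.
  by exists 0 => y [].
apply: bigmax_le.
  by apply: lb_le_inf => // y [].
move=> j /andP[ji ij].
have jl : (j <= l)%N by rewrite -ltnS ltn_ord.
apply: lb_le_inf => // mu [m0 cov].
have [a ea] : {a | covering_minimum V K Lam j = a} by eexists.
have [b eb] : {b | covering_minimum W L Gam (i - j) = b} by eexists.
have a0 : 0 <= a by rewrite -ea; apply: cm_ge0.
have b0 : 0 <= b by rewrite -eb; apply: cm_ge0.
rewrite ea eb leNgt; apply/negP => Hlt.
have [a00|apos] := eqVneq a 0.
  have mub : mu < covering_minimum W L Gam (i - j) by rewrite eb; move: Hlt; rewrite a00 add0r.
  have [a2 [U2 [a2W U2W rU2 miss2]]] := cm_lower m0 mub.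
  have [U1 [U1V rU1]] := sub_exists (ltac:(rewrite rV; exact: leq_subr) : (l - j <= \rank V)%N).
  have rk : (\rank U1 + \rank U2)%N = (d - i)%N by rewrite rU1 rU2 rW; exact: natA jl ji ij ld id.
  have [t [k [y [lam [gam [[t01 Kk Ly Ll Gg] [_ H2]]]]]]] :=
    key_lower VW KV LW LamV GamW (sub0mx _ _) U1V a2W U2W
      rk cov.
  case/andP: t01 => t0 t1.
  have s0 : 0 <= mu * (1 - t) by rewrite mulr_ge0 // subr_ge0.
  have := miss_gt cL L0 miss2 s0 Ly Gg H2.
  have := mulr_ge0 m0 t0; rewrite mulrBr mulr1 => h1 h2; exact: fin1 h1 h2.
have [b00|bpos] := eqVneq b 0.
  have mua : mu < covering_minimum V K Lam j by rewrite ea; move: Hlt; rewrite b00 addr0.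
  have [a1 [U1 [a1V U1V rU1 miss1]]] := cm_lower m0 mua.
  have [U2 [U2W rU2]] := sub_exists (ltac:(rewrite rW; exact: leq_subr) : (d - l - (i - j) <= \rank W)%N).
  have rk : (\rank U1 + \rank U2)%N = (d - i)%N by rewrite rU1 rU2 rV; exact: natA jl ji ij ld id.
  have [t [k [y [lam [gam [[t01 Kk Ly Ll Gg] [H1 _]]]]]]] :=
    key_lower VW KV LW LamV GamW a1V U1V (sub0mx _ _) U2W
      rk cov.
  case/andP: t01 => t0 t1.
  have s0 : 0 <= mu * t by rewrite mulr_ge0.
  have := miss_gt cK K0 miss1 s0 Kk Ll H1.
  have := mulr_ge0 m0 (ltac:(by rewrite subr_ge0) : 0 <= 1 - t); rewrite mulrBr mulr1 => h1 h2; exact: fin2 h1 h2.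
have ap : 0 < a by rewrite lt_neqAle eq_sym apos a0.
have bp : 0 < b by rewrite lt_neqAle eq_sym bpos b0.
have abp : 0 < a + b by rewrite addr_gt0.
pose al := a * mu / (a + b).
pose be := b * mu / (a + b).
have albe : al + be = mu.
  by rewrite /al /be -mulrDl -mulrDl mulrC mulKf // gt_eqF.
have al0 : 0 <= al by rewrite /al divr_ge0 ?mulr_ge0 // ltW.
have be0 : 0 <= be by rewrite /be divr_ge0 ?mulr_ge0 // ltW.
have ala : al < covering_minimum V K Lam j by rewrite ea /al ltr_pdivrMr // ltr_pM2l.
have beb : be < covering_minimum W L Gam (i - j) by rewrite eb /be ltr_pdivrMr // ltr_pM2l.
have [a1 [U1 [a1V U1V rU1 miss1]]] := cm_lower al0 ala.
have [a2 [U2 [a2W U2W rU2 miss2]]] := cm_lower be0 beb.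
have rk : (\rank U1 + \rank U2)%N = (d - i)%N by rewrite rU1 rU2 rV rW; exact: natA jl ji ij ld id.
have [t [k [y [lam [gam [[t01 Kk Ly Ll Gg] [H1 H2]]]]]]] :=
  key_lower VW KV LW LamV GamW a1V U1V a2W U2W
    rk cov.
case/andP: t01 => t0 t1.
have s1 : 0 <= mu * t by rewrite mulr_ge0.
have s2 : 0 <= mu * (1 - t) by rewrite mulr_ge0 // subr_ge0.
have := miss_gt cK K0 miss1 s1 Kk Ll H1.
have := miss_gt cL L0 miss2 s2 Ly Gg H2.
rewrite mulrBr mulr1; exact: fin3 albe.
Qed.
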